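(* Let $d\ge2$, $s\in[-\infty,0]$, let $\rho$ be a density matrix on $\mathbb{C}^d$ and $X,Y$ be $d\times d$ Hermitian matrices. Then $I^s(\rho,X)\,I^s(\rho,Y)\ge\frac{1}{16}\left(I^s(\rho,X+Y)-I^s(\rho,X-Y)\right)^2.$
   Context: Write $\rho=\sum_{i}\lambda_i|\psi_i\rangle\langle\psi_i|$ (orthonormal eigenbasis, $\lambda_1\ge\cdots\ge\lambda_d\ge0$). For $-\infty<s<0$ and $a_1,a_2>0$ let $m_s(a_1,a_2)=\left(\frac{a_1^s+a_2^s}{2}\right)^{1/s}$; $m_0(a_1,a_2)=\sqrt{a_1a_2}$; $m_{-\infty}(a_1,a_2)=\min\{a_1,a_2\}$; and $m_s(a,0)=m_s(0,a)=m_s(0,0)=0$. Define $\zeta_\rho^s(X,Y)=\mathrm{Tr}[\rho X^\dagger Y]-\sum_{i,j} m_s(\lambda_i,\lambda_j)\langle\psi_i|X^\dagger|\psi_j\rangle\langle\psi_j|Y|\psi_i\rangle$ and $I^s(\rho,X)=\zeta_\rho^s(X,X)$. *)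

(* Defs.v *)
From HB Require Import structures.
From mathcomp Require Import all_boot all_order all_algebra.
From mathcomp Require Import complex.
From mathcomp Require Import reals constructive_ereal exp.
Set Implicit Arguments. Unset Strict Implicit. Unset Printing Implicit Defensive.
Import Order.TTheory GRing.Theory Num.Theory.
Local Open Scope ring_scope.

Section Defs.
Variable R : realType.
Local Notation C := R[i].

Definition adjmx m n (A : 'M[C]_(m, n)) : 'M[C]_(n, m) := map_mx Num.conj A^T.

Definition hermitian_mx n (A : 'M[C]_n) : Prop := adjmx A = A.

Definition density_matrix n (rho : 'M[C]_n) : Prop :=
  [/\ hermitian_mx rho,
      (forall v : 'cV[C]_n, 0 <= (adjmx v *m rho *m v) 0 0)
    & \tr rho = 1].

Definition eigendecomp n (rho : 'M[C]_n) (lam : 'I_n -> R) (U : 'M[C]_n) : Prop :=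
  [/\ adjmx U *m U = 1%:M,
      (forall i, 0 <= lam i),
      (forall i j : 'I_n, (i <= j)%N -> lam j <= lam i)
    & rho = \sum_i (lam i)%:C%C *: (col i U *m adjmx (col i U))].

Definition mean_s (s : \bar R) (a b : R) : R :=
  if (a == 0) || (b == 0) then 0 else
  match s with
  | -oo%E => Num.min a b
  | +oo%E => 0 (* not used: s <= 0 *)
  | r%:E => if r == 0 then Num.sqrt (a * b)
            else powR ((powR a r + powR b r) / 2) r^-1
  end.

Definition braket n (U : 'M[C]_n) (i : 'I_n) (A : 'M[C]_n) (j : 'I_n) : C :=
  (adjmx (col i U) *m A *m col j U) 0 0.

Definition zeta n (s : \bar R) (rho : 'M[C]_n) (lam : 'I_n -> R) (U : 'M[C]_n)
  (X Y : 'M[C]_n) : C :=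
  \tr (rho *m adjmx X *m Y)
  - \sum_i \sum_j (mean_s s (lam i) (lam j))%:C%C
                    * braket U i (adjmx X) j * braket U j Y i.

Definition Is n (s : \bar R) (rho : 'M[C]_n) (lam : 'I_n -> R) (U : 'M[C]_n)
  (X : 'M[C]_n) : C := zeta s rho lam U X X.

End Defs.

(* Main.v *)
Require Import Defs.
From HB Require Import structures.
From mathcomp Require Import all_boot all_order all_algebra.
From mathcomp Require Import complex.
From mathcomp Require Import reals constructive_ereal exp sequences.
From mathcomp Require Import ring lra.
Import Order.TTheory GRing.Theory Num.Theory.
Local Open Scope ring_scope.
Local Open Scope complex_scope.
Set Implicit Arguments. Unset Strict Implicit.

Section RealPart.
Variable R : realType.

Lemma amgm_exp (x y : R) : expR ((x + y) / 2) <= (expR x + expR y) / 2.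
Proof.
have ex : expR x = expR (x/2) * expR (x/2) by rewrite -expRD; congr expR; field.
have ey : expR y = expR (y/2) * expR (y/2) by rewrite -expRD; congr expR; field.
have exy : expR ((x + y)/2) = expR (x/2) * expR (y/2) by rewrite -expRD; congr expR; field.
rewrite ex ey exy.
set p := expR (x/2); set q := expR (y/2).
have := sqr_ge0 (p - q); nra.
Qed.

Lemma powmean_le (a b r : R) : 0 < a -> 0 < b -> r < 0 ->
  powR ((powR a r + powR b r) / 2) r^-1 <= (a + b) / 2.
Proof.
move=> a0 b0 r0.
have pa : powR a r = expR (r * ln a) by rewrite /powR gt_eqF.
have pb : powR b r = expR (r * ln b) by rewrite /powR gt_eqF.
rewrite pa pb.
set u := (expR (r * ln a) + expR (r * ln b)) / 2.
have u0 : 0 < u by rewrite /u divr_gt0 // addr_gt0 // expR_gt0.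
rewrite /powR gt_eqF //.
have h1 : expR ((r * ln a + r * ln b)/2) <= u by exact: amgm_exp.
have h2 : (r * ln a + r * ln b)/2 <= ln u.
  by rewrite -ler_expR lnK // posrE.
have h3 : r^-1 * ln u <= (ln a + ln b) / 2.
  have t0 : r^-1 < 0 by rewrite invr_lt0.
  have tr : r^-1 * r = 1 by rewrite mulVf // lt_eqF.
  set L := ln u in h2 *. set t := r^-1 in t0 tr *.
  have e : t * ((r * ln a + r * ln b)/2) = (t * r) * ((ln a + ln b)/2) by ring.
  rewrite tr mul1r in e; rewrite -e.
  nra.
apply: le_trans (_ : expR ((ln a + ln b) / 2) <= _).
  by rewrite ler_expR.
apply: le_trans (amgm_exp _ _) _.
by rewrite !lnK ?posrE.
Qed.


Lemma mean_le (s : \bar R) (a b : R) : (s <= 0)%E -> 0 <= a -> 0 <= b ->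
  mean_s s a b <= (a + b) / 2.
Proof.
move=> s0 a0 b0; rewrite /mean_s.
case: ifP => [_|/norP[an bn]]; first by rewrite divr_ge0 ?addr_ge0.
have ap : 0 < a by rewrite lt_def an a0.
have bp : 0 < b by rewrite lt_def bn b0.
case: s s0 => [r| |] s0.
- rewrite lee_fin in s0. case: ifP => [/eqP r0| rn].
  + rewrite -(@ger0_norm _ ((a+b)/2)); last by rewrite divr_ge0 ?addr_ge0.
    rewrite -sqrtr_sqr ler_sqrt; last exact: sqr_ge0.
    have := sqr_ge0 (a - b); nra.
  + by apply: powmean_le => //; rewrite lt_neqAle rn s0.
- by rewrite divr_ge0 ?addr_ge0.
- rewrite ge_min; apply/orP; case: (leP a b) => h; [left|right]; lra.
Qed.

Lemma mean_sym (s : \bar R) (a b : R) : mean_s s a b = mean_s s b a.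
Proof.
rewrite /mean_s orbC; case: s => [r| | ].
- by rewrite mulrC [powR a r + _]addrC.
- by [].
- by rewrite minC.
Qed.

Lemma sum2_lin n (v F G H : 'I_n -> 'I_n -> R) (x y z : R) :
  \sum_i \sum_j v i j * (x * F i j + y * G i j + z * H i j) =
  x * (\sum_i \sum_j v i j * F i j) + y * (\sum_i \sum_j v i j * G i j)
  + z * (\sum_i \sum_j v i j * H i j).
Proof.
rewrite !mulr_sumr -!big_split; apply: eq_bigr => i _ /=.
rewrite !mulr_sumr -!big_split; apply: eq_bigr => j _ /=; ring.
Qed.

Lemma CS2 n (v f1 f2 g1 g2 : 'I_n -> 'I_n -> R) : (forall i j, 0 <= v i j) ->
  (\sum_i \sum_j v i j * (f1 i j * g1 i j + f2 i j * g2 i j)) ^+ 2 <=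
  (\sum_i \sum_j v i j * (f1 i j ^+ 2 + f2 i j ^+ 2)) *
  (\sum_i \sum_j v i j * (g1 i j ^+ 2 + g2 i j ^+ 2)).
Proof.
move=> v0.
set A := \sum_i \sum_j v i j * (f1 i j ^+ 2 + f2 i j ^+ 2).
set B := \sum_i \sum_j v i j * (f1 i j * g1 i j + f2 i j * g2 i j).
set C := \sum_i \sum_j v i j * (g1 i j ^+ 2 + g2 i j ^+ 2).
have key : forall x y, 0 <= x ^+ 2 * A + (2 * x * y) * B + y ^+ 2 * C.
  move=> x y; rewrite /A /B /C -sum2_lin.
  apply: sumr_ge0 => i _; apply: sumr_ge0 => j _.
  apply: mulr_ge0 => //.
  have -> : x ^+ 2 * (f1 i j ^+ 2 + f2 i j ^+ 2) +
     2 * x * y * (f1 i j * g1 i j + f2 i j * g2 i j) +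
     y ^+ 2 * (g1 i j ^+ 2 + g2 i j ^+ 2) =
     (x * f1 i j + y * g1 i j) ^+ 2 + (x * f2 i j + y * g2 i j) ^+ 2 by ring.
  by rewrite addr_ge0 ?sqr_ge0.
have k1 := key B (- A).
have k2 := key C (- B).
have k3 := key 1 1.
have k4 := key 1 (-1).
have A0 : 0 <= A by have := key 1 0; rewrite !(expr1n, expr0n, mul1r, mul0r, mulr0, addr0) /=.
have C0 : 0 <= C by have := key 0 1; rewrite !(expr1n, expr0n, mul1r, mul0r, mulr0, add0r) /=.
have e1 : B ^+ 2 * A + 2 * B * - A * B + (- A) ^+ 2 * C = A * (A * C - B ^+ 2) by ring.
have e2 : C ^+ 2 * A + 2 * C * - B * B + (- B) ^+ 2 * C = C * (A * C - B ^+ 2) by ring.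
rewrite e1 in k1; rewrite e2 in k2.
have [Ap|Az] : 0 < A \/ A = 0 by rewrite lt_def; case: eqP => [->|_]; [right|left].
  by rewrite -subr_ge0 -(pmulr_rge0 _ Ap).
have [Cp|Cz] : 0 < C \/ C = 0 by rewrite lt_def; case: eqP => [->|_]; [right|left].
  by rewrite -subr_ge0 -(pmulr_rge0 _ Cp).
have B0 : B = 0.
  rewrite Az Cz in k3 k4.
  apply/eqP; rewrite eq_le; apply/andP; split; lra.
by rewrite B0 Az Cz expr0n mulr0.
Qed.

End RealPart.

Section Mat.
Variable R : realType.
Local Notation C := R[i].

Lemma adjmxE m n (A : 'M[C]_(m, n)) i j : adjmx A i j = Num.conj (A j i).
Proof. by rewrite !mxE. Qed.

Lemma adjmx_mul m n p (A : 'M[C]_(m, n)) (B : 'M[C]_(n, p)) :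
  adjmx (A *m B) = adjmx B *m adjmx A.
Proof.
apply/matrixP => i j; rewrite !mxE rmorph_sum; apply: eq_bigr => k _.
by rewrite !mxE rmorphM mulrC.
Qed.

Lemma adjmxK m n (A : 'M[C]_(m, n)) : adjmx (adjmx A) = A.
Proof. by apply/matrixP => i j; rewrite !mxE conjCK. Qed.

Lemma adjmxD m n (A B : 'M[C]_(m, n)) : adjmx (A + B) = adjmx A + adjmx B.
Proof. by apply/matrixP => i j; rewrite !mxE rmorphD. Qed.

Lemma adjmxB m n (A B : 'M[C]_(m, n)) : adjmx (A - B) = adjmx A - adjmx B.
Proof. by apply/matrixP => i j; rewrite !mxE rmorphB. Qed.

Variable d : nat.
Variable U : 'M[C]_d.

Definition Bm (A : 'M[C]_d) := adjmx U *m A *m U.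

Lemma braketE i A j : braket U i A j = Bm A i j.
Proof.
rewrite /braket /Bm !mxE; apply: eq_bigr => l _; rewrite !mxE; congr (_ * _).
by apply: eq_bigr => k _; rewrite !mxE.
Qed.

Lemma Bm_adj A : Bm (adjmx A) = adjmx (Bm A).
Proof. by rewrite /Bm !adjmx_mul adjmxK mulmxA. Qed.

Lemma Bm_mul A W : U *m adjmx U = 1%:M -> Bm (A *m W) = Bm A *m Bm W.
Proof.
move=> hU; rewrite /Bm !mulmxA -(mulmxA _ U (adjmx U)) hU mulmx1.
by [].
Qed.

Lemma Bm_add A W : Bm (A + W) = Bm A + Bm W.
Proof. by rewrite /Bm mulmxDr mulmxDl. Qed.

Lemma Bm_sub A W : Bm (A - W) = Bm A - Bm W.
Proof. by rewrite /Bm mulmxBr mulmxBl. Qed.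

End Mat.

Section Mat2.
Variable R : realType.
Local Notation C := R[i].

Lemma normsqC (z : C) : z * Num.conj z = ((complex.Re z) ^+ 2 + (complex.Im z) ^+ 2)%:C.
Proof. by case: z => a b; simpc; rewrite /= !expr2 [b * a]mulrC addNr. Qed.

Variable d : nat.
Variable U : 'M[C]_d.

Lemma trace_rho rho lam (M : 'M[C]_d) : eigendecomp rho lam U ->
  \tr (rho *m M) = \sum_i (lam i)%:C * Bm U M i i.
Proof.
case=> _ _ _ ->; rewrite mulmx_suml linear_sum; apply: eq_bigr => i _ /=.
rewrite -scalemxAl mxtraceZ -braketE /braket -mulmxA mxtrace_mulC.
by rewrite /mxtrace big_ord1.
Qed.

Lemma Is_herm s rho lam (Z : 'M[C]_d) : eigendecomp rho lam U -> hermitian_mx Z ->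
  Is s rho lam U Z = (\sum_i \sum_j (lam i - mean_s s (lam i) (lam j)) *
     (complex.Re (Bm U Z i j) ^+ 2 + complex.Im (Bm U Z i j) ^+ 2))%:C.
Proof.
move=> hE; rewrite /hermitian_mx => hZ.
have hU : U *m adjmx U = 1%:M by case: hE => h _ _ _; exact: mulmx1C.
have hx : forall i j, Bm U Z j i = Num.conj (Bm U Z i j).
  by move=> i j; rewrite -adjmxE -Bm_adj hZ.
rewrite /Is /zeta hZ -mulmxA (trace_rho _ hE) Bm_mul //.
rewrite rmorph_sum -sumrB; apply: eq_bigr => i _.
rewrite rmorph_sum mxE mulr_sumr -sumrB; apply: eq_bigr => j _.
rewrite !braketE (hx i j) rmorphM rmorphB /= -[_ * _ * Num.conj _]mulrA normsqC.
ring.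
Qed.

End Mat2.

Section Final.
Variable R : realType.
Local Notation C := R[i].

Definition Gq n (lam : 'I_n -> R) (m : 'I_n -> 'I_n -> R) (z : 'M[C]_n) : R :=
  \sum_i \sum_j (lam i - m i j) * (complex.Re (z i j) ^+ 2 + complex.Im (z i j) ^+ 2).

Lemma ReD (x y : C) : complex.Re (x + y) = complex.Re x + complex.Re y.
Proof. by case: x; case: y. Qed.
Lemma ImD (x y : C) : complex.Im (x + y) = complex.Im x + complex.Im y.
Proof. by case: x; case: y. Qed.
Lemma ReB (x y : C) : complex.Re (x - y) = complex.Re x - complex.Re y.
Proof. by case: x; case: y. Qed.
Lemma ImB (x y : C) : complex.Im (x - y) = complex.Im x - complex.Im y.
Proof. by case: x; case: y. Qed.
Lemma ReJ (x : C) : complex.Re (Num.conj x) = complex.Re x.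
Proof. by case: x. Qed.
Lemma ImJ (x : C) : complex.Im (Num.conj x) = - complex.Im x.
Proof. by case: x. Qed.

Lemma sum2D n (F G : 'I_n -> 'I_n -> R) :
  \sum_i \sum_j (F i j + G i j) = \sum_i \sum_j F i j + \sum_i \sum_j G i j.
Proof. rewrite -big_split; apply: eq_bigr => i _; by rewrite -big_split. Qed.

Lemma sum2Z n (F : 'I_n -> 'I_n -> R) c :
  \sum_i \sum_j (c * F i j) = c * \sum_i \sum_j F i j.
Proof. rewrite mulr_sumr; apply: eq_bigr => i _; by rewrite mulr_sumr. Qed.

Lemma sym_sum n (lam : 'I_n -> R) (m f : 'I_n -> 'I_n -> R) :
  (forall i j, f i j = f j i) ->
  \sum_i \sum_j (lam i - m i j) * f i j =
  \sum_i \sum_j ((lam i + lam j) / 2 - m i j) * f i j.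
Proof.
move=> hf.
have E : \sum_i \sum_j ((lam i - lam j) * f i j) = 0.
  set S := (X in X = 0).
  have : S = - S.
    rewrite {1}/S exchange_big /= -sumrN; apply: eq_bigr => i _.
    rewrite -sumrN; apply: eq_bigr => j _; rewrite (hf j i); ring.
  move=> h; lra.
transitivity (\sum_i \sum_j (((lam i + lam j) / 2 - m i j) * f i j +
                             2^-1 * ((lam i - lam j) * f i j))).
  by apply: eq_bigr => i _; apply: eq_bigr => j _; field.
have h1 := @sum2D n (fun i j => ((lam i + lam j)/2 - m i j) * f i j) (fun i j => 2^-1 * ((lam i - lam j) * f i j)).
have h2 := @sum2Z n (fun i j => (lam i - lam j) * f i j) 2^-1.
rewrite /= in h1 h2.
by rewrite h1 h2 E mulr0 addr0.
Qed.

Lemma final_real n (lam : 'I_n -> R) (m : 'I_n -> 'I_n -> R) (x y : 'M[C]_n) :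
  (forall i j, m i j = m j i) -> (forall i j, 0 <= (lam i + lam j) / 2 - m i j) ->
  (forall i j, x j i = Num.conj (x i j)) -> (forall i j, y j i = Num.conj (y i j)) ->
  16%:R^-1 * (Gq lam m (x + y) - Gq lam m (x - y)) ^+ 2 <= Gq lam m x * Gq lam m y.
Proof.
move=> hm v0 hx hy.
set v := fun i j => (lam i + lam j) / 2 - m i j.
set a1 := fun i j => complex.Re (x i j).
set b1 := fun i j => complex.Im (x i j).
set a2 := fun i j => complex.Re (y i j).
set b2 := fun i j => complex.Im (y i j).
have sa1 : forall i j, a1 j i = a1 i j by move=> i j; rewrite /a1 hx ReJ.
have sa2 : forall i j, a2 j i = a2 i j by move=> i j; rewrite /a2 hy ReJ.
have sb1 : forall i j, b1 j i = - b1 i j by move=> i j; rewrite /b1 hx ImJ.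
have sb2 : forall i j, b2 j i = - b2 i j by move=> i j; rewrite /b2 hy ImJ.
set A := \sum_i \sum_j v i j * (a1 i j ^+ 2 + b1 i j ^+ 2).
set B := \sum_i \sum_j v i j * (a1 i j * a2 i j + b1 i j * b2 i j).
set Cc := \sum_i \sum_j v i j * (a2 i j ^+ 2 + b2 i j ^+ 2).
have hA : Gq lam m x = A.
  have s1 : forall i j, a1 i j ^+ 2 + b1 i j ^+ 2 = a1 j i ^+ 2 + b1 j i ^+ 2.
    by move=> i j; rewrite sa1 sb1 sqrrN.
  exact: (@sym_sum n lam m (fun i j => a1 i j ^+ 2 + b1 i j ^+ 2) s1).
have hC : Gq lam m y = Cc.
  have s1 : forall i j, a2 i j ^+ 2 + b2 i j ^+ 2 = a2 j i ^+ 2 + b2 j i ^+ 2.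
    by move=> i j; rewrite sa2 sb2 sqrrN.
  exact: (@sym_sum n lam m (fun i j => a2 i j ^+ 2 + b2 i j ^+ 2) s1).
have hP : Gq lam m (x + y) = A + 2 * B + Cc.
  have s1 : forall i j, (a1 i j + a2 i j) ^+ 2 + (b1 i j + b2 i j) ^+ 2 =
                        (a1 j i + a2 j i) ^+ 2 + (b1 j i + b2 j i) ^+ 2.
    by move=> i j; rewrite sa1 sa2 sb1 sb2; ring.
  rewrite /Gq.
  transitivity (\sum_i \sum_j (lam i - m i j) *
     ((a1 i j + a2 i j) ^+ 2 + (b1 i j + b2 i j) ^+ 2)).
    by apply: eq_bigr => i _; apply: eq_bigr => j _; rewrite !mxE ReD ImD.
  apply: etrans (@sym_sum n lam m
     (fun i j => (a1 i j + a2 i j) ^+ 2 + (b1 i j + b2 i j) ^+ 2) s1) _.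
  transitivity (\sum_i \sum_j v i j * (1 * (a1 i j ^+ 2 + b1 i j ^+ 2) +
      2 * (a1 i j * a2 i j + b1 i j * b2 i j) + 1 * (a2 i j ^+ 2 + b2 i j ^+ 2))).
    by apply: eq_bigr => i _; apply: eq_bigr => j _; rewrite /v /=; ring.
  apply: etrans (@sum2_lin R n v (fun i j => a1 i j ^+ 2 + b1 i j ^+ 2)
     (fun i j => a1 i j * a2 i j + b1 i j * b2 i j)
     (fun i j => a2 i j ^+ 2 + b2 i j ^+ 2) 1 2 1) _.
  by rewrite !mul1r.
have hM : Gq lam m (x - y) = A - 2 * B + Cc.
  have s1 : forall i j, (a1 i j - a2 i j) ^+ 2 + (b1 i j - b2 i j) ^+ 2 =
                        (a1 j i - a2 j i) ^+ 2 + (b1 j i - b2 j i) ^+ 2.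
    by move=> i j; rewrite sa1 sa2 sb1 sb2; ring.
  rewrite /Gq.
  transitivity (\sum_i \sum_j (lam i - m i j) *
     ((a1 i j - a2 i j) ^+ 2 + (b1 i j - b2 i j) ^+ 2)).
    by apply: eq_bigr => i _; apply: eq_bigr => j _; rewrite !mxE ReB ImB.
  apply: etrans (@sym_sum n lam m
     (fun i j => (a1 i j - a2 i j) ^+ 2 + (b1 i j - b2 i j) ^+ 2) s1) _.
  transitivity (\sum_i \sum_j v i j * (1 * (a1 i j ^+ 2 + b1 i j ^+ 2) +
      (-2) * (a1 i j * a2 i j + b1 i j * b2 i j) + 1 * (a2 i j ^+ 2 + b2 i j ^+ 2))).
    by apply: eq_bigr => i _; apply: eq_bigr => j _; rewrite /v /=; ring.
  apply: etrans (@sum2_lin R n v (fun i j => a1 i j ^+ 2 + b1 i j ^+ 2)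
     (fun i j => a1 i j * a2 i j + b1 i j * b2 i j)
     (fun i j => a2 i j ^+ 2 + b2 i j ^+ 2) 1 (-2) 1) _.
  by rewrite !mul1r mulNr.
rewrite hA hC hP hM.
have -> : 16%:R^-1 * (A + 2 * B + Cc - (A - 2 * B + Cc)) ^+ 2 = B ^+ 2 by field.
exact: CS2.
Qed.

End Final.

Local Close Scope complex_scope.

Theorem theorem5 (R : realType) (d : nat) (s : \bar R)
  (rho : 'M[R[i]]_d) (lam : 'I_d -> R) (U : 'M[R[i]]_d) (X Y : 'M[R[i]]_d) :
  (2 <= d)%N ->
  (s <= 0)%E ->
  density_matrix rho ->
  eigendecomp rho lam U ->
  hermitian_mx X -> hermitian_mx Y ->
  Is s rho lam U X * Is s rho lam U Y >=
    (16%:R)^-1 * (Is s rho lam U (X + Y) - Is s rho lam U (X - Y)) ^+ 2.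
Proof.
move=> _ s0 _ hE hX hY.
have lam0 : forall i, 0 <= lam i by case: hE.
have hXY : hermitian_mx (X + Y).
  by move: hX hY; rewrite /hermitian_mx => hX hY; rewrite adjmxD hX hY.
have hXmY : hermitian_mx (X - Y).
  by move: hX hY; rewrite /hermitian_mx => hX hY; rewrite adjmxB hX hY.
have IsG : forall Z, hermitian_mx Z -> Is s rho lam U Z =
    (Gq lam (fun i j => mean_s s (lam i) (lam j)) (Bm U Z))%:C%C.
  by move=> Z hZ; exact: (@Is_herm R d U s rho lam Z hE hZ).
have hB : forall Z, hermitian_mx Z -> forall i j, Bm U Z j i = Num.conj (Bm U Z i j).
  by move=> Z hZ i j; rewrite -adjmxE -Bm_adj hZ.
rewrite (IsG X hX) (IsG Y hY) (IsG _ hXY) (IsG _ hXmY) Bm_add Bm_sub.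
have e16 : (16%:R : R[i])^-1 = ((16%:R : R)^-1)%:C%C by rewrite fmorphV rmorph_nat.
rewrite e16 -rmorphB -rmorphXn -!rmorphM lecR.
apply: final_real.
- by move=> i j; exact: mean_sym.
- by move=> i j; rewrite subr_ge0; exact: mean_le.
- exact: hB.
- exact: hB.
Qed.
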